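(* Let $a,b,c,m>0$ with $0<a<1$ and consider, with bifurcation parameter $k>0$, the system $$\frac{dx}{dt}=bx(1-x-cy),\qquad \frac{dy}{dt}=y\Big(\frac{1}{1+kx}-y-ax-mxy\Big).$$ Let $k^*=\frac1a-1$. Suppose $u(E)<0$ and $m\ne -a^2c+2ac-1$. Then the system undergoes a transcritical bifurcation around the boundary equilibrium $E_1=(1,0)$ at the bifurcation parameter threshold $k_{TR}=k^*$.
   Context: Here $u(x)=A_1x^3+A_2x^2+A_3x+A_4$ with $A_1=km$, $A_2=(-ac-m+1)k+m$, $A_3=-ac-k-m+1$, $A_4=c-1$ (the cubic whose roots in $(0,1)$ give the $x$-coordinates of positive equilibria $(x,(1-x)/c)$), and $E$ denotes the larger real root of $u'(x)$ (assumed to exist). All parameters are positive. *)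

(* Defs.v *)
From Stdlib Require Import Reals.
From Coquelicot Require Import Coquelicot.
Open Scope R_scope.

Definition f1 (b c : R) (k x y : R) : R := b * x * (1 - x - c * y).
Definition f2 (a m : R) (k x y : R) : R :=
  y * (1 / (1 + k * x) - y - a * x - m * x * y).

Definition A1 (a c k m : R) : R := k * m.
Definition A2 (a c k m : R) : R := (- a * c - m + 1) * k + m.
Definition A3 (a c k m : R) : R := - a * c - k - m + 1.
Definition A4 (a c k m : R) : R := c - 1.
Definition u (a c k m x : R) : R :=
  A1 a c k m * x ^ 3 + A2 a c k m * x ^ 2 + A3 a c k m * x + A4 a c k m.
Definition du (a c k m x : R) : R :=
  3 * A1 a c k m * x ^ 2 + 2 * A2 a c k m * x + A3 a c k m.

Definition larger_root_du (a c k m E : R) : Prop :=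
  du a c k m E = 0 /\ (forall z, du a c k m z = 0 -> z <= E).

Section VF.
Variables F1 F2 : R -> R -> R -> R.

Definition equilibrium (k x y : R) : Prop := F1 k x y = 0 /\ F2 k x y = 0.

Definition J11 k x y := Derive (fun s => F1 k s y) x.
Definition J12 k x y := Derive (fun s => F1 k x s) y.
Definition J21 k x y := Derive (fun s => F2 k s y) x.
Definition J22 k x y := Derive (fun s => F2 k x s) y.

Definition has_partials (k x y : R) : Prop :=
  ex_derive (fun s => F1 k s y) x /\ ex_derive (fun s => F1 k x s) y /\
  ex_derive (fun s => F2 k s y) x /\ ex_derive (fun s => F2 k x s) y.

Definition trJ k x y := J11 k x y + J22 k x y.
Definition detJ k x y := J11 k x y * J22 k x y - J12 k x y * J21 k x y.

Definition is_sink k x y : Prop :=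
  has_partials k x y /\ trJ k x y < 0 /\ 0 < detJ k x y.
Definition is_saddle k x y : Prop :=
  has_partials k x y /\ detJ k x y < 0.

(* Transcritical bifurcation at the equilibrium (x0,y0) at parameter k0:
   - at k0 the Jacobian has a simple zero eigenvalue (det = 0, tr <> 0);
   - (x0,y0) is an equilibrium for all k near k0, and a second branch of
     equilibria q(k), continuous with q(k0) = (x0,y0), crosses it: near
     (x0,y0) the only equilibria are (x0,y0) and q(k), with q(k) distinct
     from (x0,y0) for k <> k0;
   - the two branches exchange stability when k crosses k0. *)
Definition transcritical_bifurcation (x0 y0 k0 : R) : Prop :=
  has_partials k0 x0 y0 /\ detJ k0 x0 y0 = 0 /\ trJ k0 x0 y0 <> 0 /\
  exists (delta r : R) (q1 q2 : R -> R),
    0 < delta /\ 0 < r /\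
    continuous q1 k0 /\ continuous q2 k0 /\ q1 k0 = x0 /\ q2 k0 = y0 /\
    (forall k, Rabs (k - k0) < delta ->
       equilibrium k x0 y0 /\
       equilibrium k (q1 k) (q2 k) /\
       (q1 k - x0) ^ 2 + (q2 k - y0) ^ 2 < r ^ 2 /\
       (k <> k0 -> (q1 k, q2 k) <> (x0, y0)) /\
       (forall x y, (x - x0) ^ 2 + (y - y0) ^ 2 < r ^ 2 -> equilibrium k x y ->
          (x, y) = (x0, y0) \/ (x, y) = (q1 k, q2 k))) /\
    (((forall k, k0 - delta < k < k0 -> is_sink k x0 y0 /\ is_saddle k (q1 k) (q2 k)) /\
      (forall k, k0 < k < k0 + delta -> is_saddle k x0 y0 /\ is_sink k (q1 k) (q2 k)))
     \/
     ((forall k, k0 - delta < k < k0 -> is_saddle k x0 y0 /\ is_sink k (q1 k) (q2 k)) /\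
      (forall k, k0 < k < k0 + delta -> is_sink k x0 y0 /\ is_saddle k (q1 k) (q2 k)))).

End VF.

(* Main.v *)
Require Import Defs.
From Stdlib Require Import Reals Lra Psatz ClassicalEpsilon.
From Coquelicot Require Import Coquelicot.
Open Scope R_scope.

Definition near3 (k0 : R) (P : R -> R -> R -> Prop) :=
  exists d, 0 < d /\ forall k y1 y2, Rabs (k - k0) < d -> Rabs y1 < d -> Rabs y2 < d -> P k y1 y2.
Definition cont3 (k0 : R) (F : R -> R -> R -> R) :=
  forall eps, 0 < eps -> near3 k0 (fun k y1 y2 => Rabs (F k y1 y2 - F k0 0 0) < eps).

Lemma near3_and k0 P Q : near3 k0 P -> near3 k0 Q ->
  near3 k0 (fun k y1 y2 => P k y1 y2 /\ Q k y1 y2).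
Proof.
  intros [d1 [H1 P1]] [d2 [H2 P2]]. exists (Rmin d1 d2); split.
  - apply Rmin_pos; auto.
  - intros k y1 y2 A B C.
    pose proof (Rmin_l d1 d2); pose proof (Rmin_r d1 d2).
    split; [apply P1 | apply P2]; lra.
Qed.

Lemma cont3_const k0 C : cont3 k0 (fun _ _ _ => C).
Proof. intros e He; exists 1; split; [lra|]; intros; rewrite Rminus_eq_0, Rabs_R0; auto. Qed.
Lemma cont3_k k0 : cont3 k0 (fun k _ _ => k).
Proof. intros e He; exists e; split; [lra|]; intros; auto. Qed.
Lemma cont3_y1 k0 : cont3 k0 (fun _ y1 _ => y1).
Proof. intros e He; exists e; split; [lra|]; intros; rewrite Rminus_0_r; auto. Qed.
Lemma cont3_y2 k0 : cont3 k0 (fun _ _ y2 => y2).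
Proof. intros e He; exists e; split; [lra|]; intros; rewrite Rminus_0_r; auto. Qed.

Lemma cont3_plus k0 A B : cont3 k0 A -> cont3 k0 B -> cont3 k0 (fun k y1 y2 => A k y1 y2 + B k y1 y2).
Proof.
  intros HA HB e He.
  destruct (near3_and _ _ _ (HA (e/2) ltac:(lra)) (HB (e/2) ltac:(lra))) as [d [Hd P]].
  exists d; split; auto; intros k y1 y2 X Y Z; destruct (P k y1 y2 X Y Z) as [P1 P2].
  replace (A k y1 y2 + B k y1 y2 - (A k0 0 0 + B k0 0 0)) with
    ((A k y1 y2 - A k0 0 0) + (B k y1 y2 - B k0 0 0)) by ring.
  eapply Rle_lt_trans; [apply Rabs_triang|]; lra.
Qed.

Lemma cont3_opp k0 A : cont3 k0 A -> cont3 k0 (fun k y1 y2 => - A k y1 y2).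
Proof.
  intros HA e He. destruct (HA e He) as [d [Hd P]]. exists d; split; auto; intros.
  replace (- A k y1 y2 - - A k0 0 0) with (- (A k y1 y2 - A k0 0 0)) by ring.
  rewrite Rabs_Ropp; auto.
Qed.

Lemma cont3_mult k0 A B : cont3 k0 A -> cont3 k0 B -> cont3 k0 (fun k y1 y2 => A k y1 y2 * B k y1 y2).
Proof.
  intros HA HB e He.
  set (F0 := A k0 0 0). set (G0 := B k0 0 0).
  assert (Hp : 0 < 1 + Rabs F0 + Rabs G0) by (pose proof (Rabs_pos F0); pose proof (Rabs_pos G0); lra).
  set (e1 := Rmin 1 (e / (1 + Rabs F0 + Rabs G0))).
  assert (He1 : 0 < e1) by (apply Rmin_pos; [lra| apply Rdiv_lt_0_compat; lra]).
  assert (He1a : e1 <= 1) by apply Rmin_l.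
  assert (He1b : e1 * (1 + Rabs F0 + Rabs G0) <= e).
  { assert (e1 <= e / (1 + Rabs F0 + Rabs G0)) by apply Rmin_r.
    apply Rmult_le_compat_r with (r := 1 + Rabs F0 + Rabs G0) in H; [|lra].
    replace (e / (1 + Rabs F0 + Rabs G0) * (1 + Rabs F0 + Rabs G0)) with e in H by (field; lra). lra. }
  destruct (near3_and _ _ _ (HA e1 He1) (HB e1 He1)) as [d [Hd P]].
  exists d; split; auto; intros k y1 y2 X Y Z; destruct (P k y1 y2 X Y Z) as [P1 P2].
  fold F0 G0 in P1, P2 |- *.
  set (u := A k y1 y2 - F0) in *. set (v := B k y1 y2 - G0) in *.
  replace (A k y1 y2 * B k y1 y2 - F0 * G0) with (u * v + u * G0 + F0 * v) by (unfold u, v; ring).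
  eapply Rle_lt_trans; [apply Rabs_triang|].
  eapply Rle_lt_trans; [apply Rplus_le_compat_r; apply Rabs_triang|].
  rewrite !Rabs_mult.
  pose proof (Rabs_pos u); pose proof (Rabs_pos v); pose proof (Rabs_pos F0); pose proof (Rabs_pos G0).
  assert (Rabs u * Rabs v <= Rabs u) by nra.
  assert (Rabs u * Rabs G0 <= e1 * Rabs G0) by nra.
  assert (Rabs F0 * Rabs v <= Rabs F0 * e1) by nra.
  nra.
Qed.

Lemma cont3_minus k0 A B : cont3 k0 A -> cont3 k0 B -> cont3 k0 (fun k y1 y2 => A k y1 y2 - B k y1 y2).
Proof. intros HA HB. apply (cont3_plus k0 A (fun k y1 y2 => - B k y1 y2)); auto. apply cont3_opp; auto. Qed.

Lemma cont3_pow k0 A n : cont3 k0 A -> cont3 k0 (fun k y1 y2 => A k y1 y2 ^ n).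
Proof.
  intros HA; induction n; simpl.
  - apply cont3_const.
  - apply (cont3_mult k0 A (fun k y1 y2 => A k y1 y2 ^ n)); auto.
Qed.

Ltac c3 := repeat match goal with
  | |- cont3 _ (fun _ _ _ => ?C) => apply cont3_const
  | |- cont3 _ (fun k _ _ => k) => apply cont3_k
  | |- cont3 _ (fun _ y _ => y) => apply cont3_y1
  | |- cont3 _ (fun _ _ y => y) => apply cont3_y2
  | |- cont3 _ (fun k y1 y2 => @?A k y1 y2 + @?B k y1 y2) => refine (cont3_plus _ A B _ _)
  | |- cont3 _ (fun k y1 y2 => @?A k y1 y2 - @?B k y1 y2) => refine (cont3_minus _ A B _ _)
  | |- cont3 _ (fun k y1 y2 => @?A k y1 y2 * @?B k y1 y2) => refine (cont3_mult _ A B _ _)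
  | |- cont3 _ (fun k y1 y2 => - @?A k y1 y2) => refine (cont3_opp _ A _)
  | |- cont3 _ (fun k y1 y2 => @?A k y1 y2 ^ ?n) => refine (cont3_pow _ A n _)
  end.

Lemma cont3_pos k0 F : cont3 k0 F -> 0 < F k0 0 0 -> near3 k0 (fun k y1 y2 => 0 < F k y1 y2).
Proof.
  intros HF H0. destruct (HF _ H0) as [d [Hd P]]. exists d; split; auto.
  intros k y1 y2 X Y Z. specialize (P k y1 y2 X Y Z). apply Rabs_def2 in P. lra.
Qed.

Lemma jac (a b c m k x y : R) : 1 + k * x <> 0 ->
  has_partials (f1 b c) (f2 a m) k x y /\
  J11 (f1 b c) k x y = b * (1 - x - c * y) - b * x /\
  J12 (f1 b c) k x y = - (b * x * c) /\
  J21 (f2 a m) k x y = y * (- (k / (1 + k * x) ^ 2) - a - m * y) /\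
  J22 (f2 a m) k x y = (1 / (1 + k * x) - y - a * x - m * x * y) - y * (1 + m * x).
Proof.
  intros Hk.
  assert (D1 : is_derive (fun s => f1 b c k s y) x (b * (1 - x - c * y) - b * x)).
  { unfold f1. auto_derive; [auto| ring]. }
  assert (D2 : is_derive (fun s => f1 b c k x s) y (- (b * x * c))).
  { unfold f1. auto_derive; [auto| ring]. }
  assert (D3 : is_derive (fun s => f2 a m k s y) x (y * (- (k / (1 + k * x) ^ 2) - a - m * y))).
  { unfold f2. auto_derive; [auto| field; auto]. }
  assert (D4 : is_derive (fun s => f2 a m k x s) y ((1 / (1 + k * x) - y - a * x - m * x * y) - y * (1 + m * x))).
  { unfold f2. auto_derive; [auto| field; auto]. }
  unfold has_partials, J11, J12, J21, J22.
  repeat split; try (eexists; eassumption); apply is_derive_unique; assumption.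
Qed.

Definition hh a c m k y := 1 - (1 + k*(1-c*y)) * (y + a*(1-c*y) + m*(1-c*y)*y).
Definition SS a c m k y1 y2 :=
  (k*c*a - (1+k)*(1-a*c+m)) + ((1+k)*m*c + k*c*(1-a*c+m)) * (y1+y2)
  + (-(k*m*c^2)) * (y1^2 + y1*y2 + y2^2).
Definition BB a c m k y := (1+k*(1-c*y))^2 * (1 + m*(1-c*y) - c*a - c*m*y) - c*k.

Lemma hh_diff a c m k y1 y2 : hh a c m k y1 - hh a c m k y2 = (y1 - y2) * SS a c m k y1 y2.
Proof. unfold hh, SS; ring. Qed.
Lemma hh_0 a c m k y : hh a c m k y = (1 - (1+k)*a) + y * SS a c m k y 0.
Proof. unfold hh, SS; ring. Qed.

Lemma lip_cont f x0 d L : 0 < d -> 0 <= L ->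
  (forall k, Rabs (k - x0) < d -> Rabs (f k - f x0) <= L * Rabs (k - x0)) -> continuous f x0.
Proof.
  intros Hd HL H. apply continuity_pt_filterlim.
  unfold continuity_pt, continue_in, limit1_in, limit_in. intros e He.
  exists (Rmin d (e / (L + 1))). split. { apply Rmin_pos; [lra| apply Rdiv_lt_0_compat; lra]. }
  intros x [_ Hx]. simpl in *. unfold R_dist in *.
  assert (Hx1 : Rabs (x - x0) < d) by exact (Rlt_le_trans _ _ _ Hx (Rmin_l _ _)).
  assert (Hx2 : Rabs (x - x0) < e / (L+1)) by exact (Rlt_le_trans _ _ _ Hx (Rmin_r _ _)).
  specialize (H x Hx1).
  assert (Rabs (x - x0) * (L+1) < e).
  { apply Rmult_lt_compat_r with (r := L+1) in Hx2; [|lra].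
    replace (e / (L + 1) * (L + 1)) with e in Hx2 by (field; lra). lra. }
  pose proof (Rabs_pos (x - x0)). nra.
Qed.

Lemma g_hh a c m k y : 1 + k*(1-c*y) <> 0 ->
  1/(1+k*(1-c*y)) - y - a*(1-c*y) - m*(1-c*y)*y = hh a c m k y / (1+k*(1-c*y)).
Proof. intros H; unfold hh; field; auto. Qed.

Theorem theorem8 (a b c m : R) :
  0 < a < 1 -> 0 < b -> 0 < c -> 0 < m ->
  (exists E, larger_root_du a c (1 / a - 1) m E /\ u a c (1 / a - 1) m E < 0) ->
  m <> - a ^ 2 * c + 2 * a * c - 1 ->
  transcritical_bifurcation (f1 b c) (f2 a m) 1 0 (1 / a - 1).
Proof.
  intros Ha Hb Hc Hm _ HmD.
  set (k0 := 1 / a - 1).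
  assert (Hk0 : (1 + k0) * a = 1) by (unfold k0; field; lra).
  set (D := 2*a*c - a^2*c - 1 - m).
  assert (HD : D <> 0) by (unfold D; lra).
  assert (HDD : 0 < D * D) by (destruct (Rlt_or_le D 0); [nra| destruct H; [nra| lra]]).
  assert (N1 : near3 k0 (fun k y1 y2 => 0 < 1 + k*(1-c*y1))).
  { apply (cont3_pos k0 (fun k y1 y2 => 1 + k*(1-c*y1))); [c3|].
    replace (1 + k0 * (1 - c * 0)) with (1/a) by (unfold k0; field; lra).
    apply Rdiv_lt_0_compat; lra. }
  assert (N2 : near3 k0 (fun k y1 y2 => 0 < 1 - c*y1)).
  { apply (cont3_pos k0 (fun k y1 y2 => 1 - c*y1)); [c3| lra]. }
  assert (N3 : near3 k0 (fun k y1 y2 => 0 < SS a c m k y1 y2 * D)).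
  { apply (cont3_pos k0 (fun k y1 y2 => SS a c m k y1 y2 * D)); [unfold SS; c3|].
    replace (SS a c m k0 0 0 * D) with (D * D / a) by (unfold SS, k0, D; field; lra).
    apply Rdiv_lt_0_compat; lra. }
  assert (N4 : near3 k0 (fun k y1 y2 => 0 < SS a c m k y1 0 * D - D * D / (2 * a))).
  { apply (cont3_pos k0 (fun k y1 y2 => SS a c m k y1 0 * D - D * D / (2 * a))); [unfold SS; c3|].
    replace (SS a c m k0 0 0 * D - D * D / (2 * a)) with (D * D / (2 * a)) by (unfold SS, k0, D; field; lra).
    apply Rdiv_lt_0_compat; lra. }
  assert (N5 : near3 k0 (fun k y1 y2 => 0 < b*(1-c*y1) + y1*(1+m*(1-c*y1)))).
  { apply (cont3_pos k0 (fun k y1 y2 => b*(1-c*y1) + y1*(1+m*(1-c*y1)))); [c3| lra]. }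
  assert (N6 : near3 k0 (fun k y1 y2 => 0 < - (BB a c m k y1 * D))).
  { apply (cont3_pos k0 (fun k y1 y2 => - (BB a c m k y1 * D))); [unfold BB; c3|].
    replace (- (BB a c m k0 0 * D)) with (D * D / (a * a)) by (unfold BB, k0, D; field; lra).
    apply Rdiv_lt_0_compat; nra. }
  destruct (near3_and _ _ _ N1 (near3_and _ _ _ N2 (near3_and _ _ _ N3
     (near3_and _ _ _ N4 (near3_and _ _ _ N5 N6))))) as [d [Hd Box]].
  clear N1 N2 N3 N4 N5 N6.
  set (rho := d / 2). set (r := Rmin 1 rho).
  assert (Hrho : 0 < rho) by (unfold rho; lra).
  assert (Hr : 0 < r) by (apply Rmin_pos; lra).
  assert (Hr1 : r <= 1) by apply Rmin_l.
  assert (Hr2 : r <= rho) by apply Rmin_r.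
  assert (HAD : 0 < Rabs D) by (apply Rabs_pos_lt; auto).
  assert (HADD : Rabs D * Rabs D = D * D) by (rewrite <- Rabs_mult; apply Rabs_pos_eq; lra).
  set (delta := Rmin d (r * Rabs D / (2 * a^2 * (1 + c)))).
  assert (Hdl : 0 < delta) by (apply Rmin_pos; [lra| apply Rdiv_lt_0_compat; [nra| nra]]).
  assert (Hdl1 : delta <= d) by apply Rmin_l.
  assert (Hdl2 : forall k, Rabs (k - k0) < delta -> Rabs (k - k0) * (2 * a^2 * (1 + c)) < r * Rabs D).
  { intros k Hk. assert (Rabs (k - k0) < r * Rabs D / (2 * a^2 * (1 + c))).
    { eapply Rlt_le_trans; [eassumption| apply Rmin_r]. }
    apply Rmult_lt_compat_r with (r := 2 * a^2 * (1 + c)) in H; [|nra].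
    replace (r * Rabs D / (2 * a ^ 2 * (1 + c)) * (2 * a ^ 2 * (1 + c))) with (r * Rabs D) in H
      by (field; nra). exact H. }
  assert (Hc0 : forall k, 1 - (1 + k) * a = - (a * (k - k0))) by (intros; nra).
  assert (Hat : forall k, a * (k - k0) * D <= a * Rabs (k - k0) * Rabs D /\
                          - (a * (k - k0) * D) <= a * Rabs (k - k0) * Rabs D).
  { intros k. assert (E : Rabs (a * (k - k0) * D) = a * Rabs (k - k0) * Rabs D)
      by (rewrite !Rabs_mult, (Rabs_pos_eq a) by lra; ring). rewrite <- E.
    split; [apply Rle_abs| rewrite <- Rabs_Ropp; apply Rle_abs]. }
  assert (Hsmall : forall k, Rabs (k - k0) < delta -> a * Rabs (k - k0) * Rabs D < rho * (D * D) / (2 * a)).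
  { intros k Hk. pose proof (Hdl2 k Hk). pose proof (Rabs_pos (k - k0)).
    apply Rmult_lt_reg_r with (r := 2 * a); [lra|].
    replace (rho * (D * D) / (2 * a) * (2 * a)) with (rho * (D * D)) by (field; lra).
    rewrite <- HADD.
    assert (0 <= Rabs (k - k0) * (2 * a ^ 2) * Rabs D * c)
      by (apply Rmult_le_pos; [apply Rmult_le_pos; [apply Rmult_le_pos|]|]; nra).
    assert (Rabs (k - k0) * (2 * a ^ 2) * Rabs D <= Rabs (k - k0) * (2 * a ^ 2 * (1 + c)) * Rabs D) by nra.
    assert (r * Rabs D * Rabs D <= rho * (Rabs D * Rabs D)) by nra.
    nra. }
  assert (Key : forall k, Rabs (k - k0) < delta -> exists y, -rho <= y <= rho /\ hh a c m k y = 0).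
  { intros k Hk.
    assert (Hkd : Rabs (k - k0) < d) by lra.
    assert (Hrd : Rabs rho < d) by (rewrite Rabs_pos_eq; unfold rho; lra).
    assert (Hrd' : Rabs (-rho) < d) by (rewrite Rabs_Ropp; auto).
    assert (H0d : Rabs 0 < d) by (rewrite Rabs_R0; lra).
    destruct (Box k rho 0 Hkd Hrd H0d) as (_ & _ & _ & P4 & _).
    destruct (Box k (-rho) 0 Hkd Hrd' H0d) as (_ & _ & _ & M4 & _).
    pose proof (Hat k) as [Hat1 Hat2]. pose proof (Hsmall k Hk).
    assert (F1 : hh a c m k (-rho) * D < 0).
    { rewrite hh_0, Hc0. nra. }
    assert (F2 : 0 < hh a c m k rho * D).
    { rewrite hh_0, Hc0. nra. }
    destruct (IVT (fun y => hh a c m k y * D) (-rho) rho) as [z [Hz1 Hz2]]; auto; [|lra|].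
    - intros z. apply continuity_pt_filterlim. apply (ex_derive_continuous (fun y => hh a c m k y * D)).
      unfold hh; auto_derive; auto.
    - exists z; split; auto. apply Rmult_integral in Hz2; destruct Hz2; [auto| contradiction]. }
  set (q2 := fun k => epsilon (inhabits 0) (fun y => -rho <= y <= rho /\ hh a c m k y = 0)).
  set (q1 := fun k => 1 - c * q2 k).
  assert (Hq : forall k, Rabs (k - k0) < delta -> -rho <= q2 k <= rho /\ hh a c m k (q2 k) = 0).
  { intros k Hk. unfold q2. apply epsilon_spec. apply Key; auto. }
  assert (Hqd : forall k, Rabs (k - k0) < delta -> Rabs (q2 k) < d).
  { intros k Hk. destruct (Hq k Hk) as [[A B] _]. apply Rabs_def1; unfold rho in *; lra. }
  assert (H0d : Rabs 0 < d) by (rewrite Rabs_R0; lra).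
  assert (Hyq : forall k, Rabs (k - k0) < delta -> q2 k * SS a c m k (q2 k) 0 = a * (k - k0)).
  { intros k Hk. destruct (Hq k Hk) as [_ E]. rewrite hh_0, Hc0 in E. lra. }
  assert (Hqb : forall k, Rabs (k - k0) < delta -> Rabs (q2 k) * Rabs D <= 2 * a^2 * Rabs (k - k0)).
  { intros k Hk. pose proof (Hyq k Hk) as E.
    destruct (Box k (q2 k) 0 ltac:(lra) (Hqd k Hk) H0d) as (_ & _ & _ & P4 & _).
    assert (E2 : Rabs (q2 k) * Rabs (SS a c m k (q2 k) 0 * D) = a * Rabs (k - k0) * Rabs D).
    { rewrite <- Rabs_mult, Rmult_assoc. rewrite <- (Rmult_assoc (q2 k)), E.
      rewrite !Rabs_mult, (Rabs_pos_eq a) by lra. ring. }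
    assert (0 < D * D / (2 * a)) by (apply Rdiv_lt_0_compat; lra).
    rewrite (Rabs_pos_eq (SS a c m k (q2 k) 0 * D)) in E2 by lra.
    pose proof (Rabs_pos (q2 k)).
    assert (Rabs (q2 k) * (D * D / (2 * a)) <= a * Rabs (k - k0) * Rabs D) by nra.
    rewrite <- HADD in H1.
    apply Rmult_le_reg_r with (r := Rabs D / (2 * a)). { apply Rdiv_lt_0_compat; lra. }
    replace (Rabs (q2 k) * Rabs D * (Rabs D / (2 * a))) with (Rabs (q2 k) * (Rabs D * Rabs D / (2 * a))) by (field; lra).
    replace (2 * a ^ 2 * Rabs (k - k0) * (Rabs D / (2 * a))) with (a * Rabs (k - k0) * Rabs D) by (field; lra).
    exact H1. }
  assert (Hq0 : q2 k0 = 0).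
  { assert (Hk : Rabs (k0 - k0) < delta) by (rewrite Rminus_eq_0, Rabs_R0; lra).
    pose proof (Hqb k0 Hk). rewrite Rminus_eq_0, Rabs_R0 in H.
    pose proof (Rabs_pos (q2 k0)).
    assert (Rabs (q2 k0) = 0) by nra. apply Rabs_eq_0 in H1. exact H1. }
  assert (E1J : forall k, 0 < 1 + k -> has_partials (f1 b c) (f2 a m) k 1 0 /\
     trJ (f1 b c) (f2 a m) k 1 0 = - b + a * (k0 - k) / (1 + k) /\
     detJ (f1 b c) (f2 a m) k 1 0 = - b * (a * (k0 - k) / (1 + k))).
  { intros k Hk. destruct (jac a b c m k 1 0) as (HP & J1 & J2 & J3 & J4); [nra|].
    unfold trJ, detJ. rewrite J1, J2, J3, J4. split; [auto|].
    unfold k0; split; field; lra. }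
  assert (QJ : forall k, Rabs (k - k0) < delta ->
     has_partials (f1 b c) (f2 a m) k (q1 k) (q2 k) /\
     trJ (f1 b c) (f2 a m) k (q1 k) (q2 k) < 0 /\
     detJ (f1 b c) (f2 a m) k (q1 k) (q2 k) * ((1 + k * q1 k)^2 * (SS a c m k (q2 k) 0)^2)
       = b * q1 k * (a * (k - k0)) * (SS a c m k (q2 k) 0 * BB a c m k (q2 k)) /\
     SS a c m k (q2 k) 0 * BB a c m k (q2 k) < 0 /\ 0 < q1 k /\
     0 < (1 + k * q1 k)^2 * (SS a c m k (q2 k) 0)^2).
  { intros k Hk.
    destruct (Box k (q2 k) 0 ltac:(lra) (Hqd k Hk) H0d) as (B1 & B2 & B3 & B4 & B5 & B6).
    destruct (Hq k Hk) as [_ Hh].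
    pose proof (Hyq k Hk) as Hy.
    unfold q1. set (y := q2 k) in *.
    destruct (jac a b c m k (1 - c * y) y) as (HP & J1 & J2 & J3 & J4); [lra|].
    assert (Hg : 1 / (1 + k * (1 - c * y)) - y - a * (1 - c * y) - m * (1 - c * y) * y = 0).
    { rewrite g_hh by lra. rewrite Hh. unfold Rdiv; ring. }
    rewrite Hg in J4.
    unfold trJ, detJ. rewrite J1, J2, J3, J4.
    set (Q := SS a c m k y 0) in *. set (B := BB a c m k y) in *.
    assert (QB : Q * B < 0).
    { assert (0 < (Q * D) * (- (B * D))) by (apply Rmult_lt_0_compat; lra). nra. }
    assert (HQ : Q <> 0) by (intro E; rewrite E in B3; lra).
    split; [auto|]. split; [nra|]. split.
    - replace (a * (k - k0)) with (y * Q) by exact Hy. unfold B, BB. field. lra.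
    - split; [auto| split; [auto|]].
      apply Rmult_lt_0_compat; [apply pow_lt; lra|].
      replace (Q ^ 2) with (Rsqr Q) by (unfold Rsqr; ring). apply Rsqr_pos_lt; auto. }
  assert (Hk0p : 0 < 1 + k0) by (unfold k0; assert (0 < 1/a) by (apply Rdiv_lt_0_compat; lra); lra).
  assert (Hbox0 : forall k, Rabs (k - k0) < delta -> 0 < 1 + k).
  { intros k Hk. destruct (Box k 0 0 ltac:(lra) H0d H0d) as (B1 & _). lra. }
  unfold transcritical_bifurcation.
  destruct (E1J k0 Hk0p) as (HP0 & Tr0 & Det0).
  split; [auto|]. split.
  { rewrite Det0, Rminus_eq_0. unfold Rdiv; ring. }
  split.
  { rewrite Tr0, Rminus_eq_0. unfold Rdiv. lra. }
  exists delta, r, q1, q2.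
  split; [auto|]. split; [auto|].
  split.
  { apply (lip_cont q1 k0 delta (c * (2 * a^2 / Rabs D))); auto.
    - apply Rmult_le_pos; [lra|]. apply Rlt_le, Rdiv_lt_0_compat; nra.
    - intros k Hk. unfold q1. rewrite Hq0.
      replace (1 - c * q2 k - (1 - c * 0)) with (- (c * q2 k)) by ring.
      rewrite Rabs_Ropp, Rabs_mult, (Rabs_pos_eq c) by lra.
      pose proof (Hqb k Hk).
      replace (c * (2 * a ^ 2 / Rabs D) * Rabs (k - k0)) with (c * (2 * a ^ 2 * Rabs (k - k0) / Rabs D)) by (field; lra).
      apply Rmult_le_compat_l; [lra|].
      apply Rmult_le_reg_r with (r := Rabs D); auto.
      replace (2 * a ^ 2 * Rabs (k - k0) / Rabs D * Rabs D) with (2 * a ^ 2 * Rabs (k - k0)) by (field; lra).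
      exact H. }
  split.
  { apply (lip_cont q2 k0 delta (2 * a^2 / Rabs D)); auto.
    - apply Rlt_le, Rdiv_lt_0_compat; nra.
    - intros k Hk. rewrite Hq0, Rminus_0_r.
      pose proof (Hqb k Hk).
      replace (2 * a ^ 2 / Rabs D * Rabs (k - k0)) with (2 * a ^ 2 * Rabs (k - k0) / Rabs D) by (field; lra).
      apply Rmult_le_reg_r with (r := Rabs D); auto.
      replace (2 * a ^ 2 * Rabs (k - k0) / Rabs D * Rabs D) with (2 * a ^ 2 * Rabs (k - k0)) by (field; lra).
      exact H. }
  split; [unfold q1; rewrite Hq0; ring|].
  split; [exact Hq0|].
  split.
  { intros k Hk.
    split; [unfold equilibrium, f1, f2; split; ring|].
    destruct (Box k (q2 k) 0 ltac:(lra) (Hqd k Hk) H0d) as (B1 & B2 & B3 & B4 & B5 & B6).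
    destruct (Hq k Hk) as [_ Hh].
    pose proof (Hyq k Hk) as Hy.
    split.
    { unfold equilibrium, f1, f2, q1. split; [ring|].
      rewrite g_hh by lra. rewrite Hh. unfold Rdiv; ring. }
    split.
    { unfold q1. pose proof (Hqb k Hk). pose proof (Hdl2 k Hk).
      pose proof (Rabs_pos (q2 k)). pose proof (Rabs_pos (k - k0)).
      assert (Rabs (q2 k) * Rabs D * (1 + c) <= 2 * a^2 * Rabs (k - k0) * (1 + c)) by nra.
      assert (Rabs (q2 k) * (1 + c) < r) by nra.
      assert (q2 k ^ 2 = Rabs (q2 k) ^ 2) by (symmetry; apply pow2_abs).
      replace ((1 - c * q2 k - 1) ^ 2 + (q2 k - 0) ^ 2) with ((1 + c^2) * q2 k ^ 2) by ring.
      rewrite H5.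
      assert (Rabs (q2 k) * (1 + c) * (Rabs (q2 k) * (1 + c)) < r * r).
      { apply Rmult_le_0_lt_compat; nra. }
      assert (0 <= 2 * c * Rabs (q2 k) ^ 2) by (pose proof (pow2_ge_0 (Rabs (q2 k))); nra).
      nra. }
    split.
    { intros Hne E. injection E as E1 E2. rewrite E2 in Hy. apply Hne. nra. }
    intros x y Hxy [E1 E2]. unfold f1 in E1. unfold f2 in E2.
    assert (Hx : 0 < x) by nra.
    assert (Hy2 : (y - 0) ^ 2 < r ^ 2) by (pose proof (pow2_ge_0 (x - 1)); lra).
    assert (Hyr0 : Rabs y < r) by (apply Rabs_def1; nra).
    assert (Hyr : Rabs y < d) by (unfold rho in *; lra).
    assert (Ex : x = 1 - c * y).
    { apply Rmult_integral in E1. destruct E1 as [E1|E1]; [|lra].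
      apply Rmult_integral in E1. destruct E1; nra. }
    subst x.
    apply Rmult_integral in E2. destruct E2 as [E2|E2].
    { left. subst y. f_equal; ring. }
    right.
    destruct (Box k y (q2 k) ltac:(lra) Hyr (Hqd k Hk)) as (C1 & C2 & C3 & _).
    rewrite g_hh in E2 by lra.
    assert (Hhy : hh a c m k y = 0).
    { unfold Rdiv in E2. apply Rmult_integral in E2. destruct E2 as [E2|E2]; auto.
      exfalso. apply Rinv_neq_0_compat in E2; auto; lra. }
    pose proof (hh_diff a c m k y (q2 k)) as Ed. rewrite Hhy, Hh in Ed.
    assert (SS a c m k y (q2 k) <> 0) by (intro E; rewrite E in C3; lra).
    assert (y = q2 k).
    { assert ((y - q2 k) * SS a c m k y (q2 k) = 0) by lra.
      apply Rmult_integral in H0. destruct H0; [lra| contradiction]. }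
    unfold q1; rewrite <- H0; reflexivity. }
  right. split.
  - intros k [Hk1 Hk2].
    assert (Hk : Rabs (k - k0) < delta) by (apply Rabs_def1; lra).
    pose proof (Hbox0 k Hk).
    destruct (E1J k H) as (HP & Tr & Det).
    destruct (QJ k Hk) as (QP & QTr & QDet & QB & Qx & QL).
    split.
    + split; auto. rewrite Det.
      assert (0 < a * (k0 - k) / (1 + k)) by (apply Rdiv_lt_0_compat; nra). nra.
    + split; auto. split; auto.
      assert (0 < detJ (f1 b c) (f2 a m) k (q1 k) (q2 k) * ((1 + k * q1 k) ^ 2 * SS a c m k (q2 k) 0 ^ 2)).
      { rewrite QDet.
        assert (0 < b * q1 k * (a * (k0 - k))) by (apply Rmult_lt_0_compat; nra).
        nra. }
      nra.
  - intros k [Hk1 Hk2].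
    assert (Hk : Rabs (k - k0) < delta) by (apply Rabs_def1; lra).
    pose proof (Hbox0 k Hk).
    destruct (E1J k H) as (HP & Tr & Det).
    destruct (QJ k Hk) as (QP & QTr & QDet & QB & Qx & QL).
    assert (0 < a * (k - k0) / (1 + k)) by (apply Rdiv_lt_0_compat; nra).
    assert (a * (k0 - k) / (1 + k) = - (a * (k - k0) / (1 + k))) by (field; lra).
    split.
    + split; [auto|]. split.
      * rewrite Tr, H1. lra.
      * rewrite Det, H1. nra.
    + split; auto.
      assert (detJ (f1 b c) (f2 a m) k (q1 k) (q2 k) * ((1 + k * q1 k) ^ 2 * SS a c m k (q2 k) 0 ^ 2) < 0).
      { rewrite QDet.
        assert (0 < b * q1 k * (a * (k - k0))) by (apply Rmult_lt_0_compat; nra).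
        nra. }
      nra.
Qed.
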